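(* Let $\mathcal{Q}$ be either the category of unital involutive quantales with unital involutive homomorphisms or the category of strong involutive quantales with strong involutive homomorphisms. Then the full subcategory of compact regular locales is closed under colimits in $\mathcal{Q}$.
   Context: A quantale is a complete lattice with an associative multiplication distributing over arbitrary joins in both variables; $1$ is its top. It is unital if it has a multiplicative unit, strong if $1\cdot 1=1$. An involutive quantale has an involution $^*$ with $a^{**}=a$, $(a\cdot b)^*=b^*\cdot a^*$, $(\bigvee a_i)^*=\bigvee a_i^*$. Homomorphisms preserve joins and multiplication; unital ones preserve the unit, strong ones the top, involutive ones the involution. A locale is a complete lattice satisfying $a\wedge\bigvee_i b_i=\bigvee_i(a\wedge b_i)$, regarded as a unital involutive quantale with multiplication $\wedge$, unit the top, trivial involution. A locale is compact if whenever $1=\bigvee S$ then $1=\bigvee F$ for some finite $F\subseteq S$; it is regular if every $a$ equals $\bigvee\{a': a'\prec a\}$, where $a'\prec a$ means there is $b$ with $a'\wedge b=0$ and $a\vee b=1$. *)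

(* Defs.v *)
From Stdlib Require Import List.

(* All quantales here
   are involutive, since both categories in the statement are involutive. *)
Record quantale := Quantale {
  car :> Type;
  le : car -> car -> Prop;
  sup : (car -> Prop) -> car;
  mul : car -> car -> car;
  inv : car -> car;
  le_refl : forall a, le a a;
  le_trans : forall a b c, le a b -> le b c -> le a c;
  le_antisym : forall a b, le a b -> le b a -> a = b;
  sup_ub : forall (S : car -> Prop) a, S a -> le a (sup S);
  sup_least : forall (S : car -> Prop) b, (forall a, S a -> le a b) -> le (sup S) b;
  mul_assoc : forall a b c, mul (mul a b) c = mul a (mul b c);
  mul_sup_l : forall a (S : car -> Prop),
      mul a (sup S) = sup (fun y => exists s, S s /\ y = mul a s);
  mul_sup_r : forall a (S : car -> Prop),
      mul (sup S) a = sup (fun y => exists s, S s /\ y = mul s a);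
  inv_inv : forall a, inv (inv a) = a;
  inv_mul : forall a b, inv (mul a b) = mul (inv b) (inv a);
  inv_sup : forall (S : car -> Prop),
      inv (sup S) = sup (fun y => exists s, S s /\ y = inv s)
}.

Arguments le {q}.
Arguments sup {q}.
Arguments mul {q}.
Arguments inv {q}.

Definition top (Q : quantale) : Q := sup (fun _ : Q => True).
Definition bot (Q : quantale) : Q := sup (fun _ : Q => False).
Definition join {Q : quantale} (a b : Q) : Q := sup (fun x => x = a \/ x = b).
Definition meet {Q : quantale} (a b : Q) : Q :=
  sup (fun x => le x a /\ le x b).

Definition img {A B : Type} (f : A -> B) (S : A -> Prop) : B -> Prop :=
  fun y => exists x, S x /\ y = f x.

Definition is_unit (Q : quantale) (e : Q) : Prop :=
  forall a : Q, mul e a = a /\ mul a e = a.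

Definition unital (Q : quantale) : Prop := exists e : Q, is_unit Q e.
Definition strong (Q : quantale) : Prop := mul (top Q) (top Q) = top Q.

Definition inv_qhom (Q R : quantale) (f : Q -> R) : Prop :=
  (forall S : Q -> Prop, f (sup S) = sup (img f S)) /\
  (forall a b : Q, f (mul a b) = mul (f a) (f b)) /\
  (forall a : Q, f (inv a) = inv (f a)).

Definition unital_hom (Q R : quantale) (f : Q -> R) : Prop :=
  forall e e', is_unit Q e -> is_unit R e' -> f e = e'.
Definition strong_hom (Q R : quantale) (f : Q -> R) : Prop :=
  f (top Q) = top R.

Inductive qcat := UnitalInv | StrongInv.

Definition cat_obj (k : qcat) (Q : quantale) : Prop :=
  match k with UnitalInv => unital Q | StrongInv => strong Q end.

Definition cat_hom (k : qcat) (Q R : quantale) (f : Q -> R) : Prop :=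
  inv_qhom Q R f /\
  match k with UnitalInv => unital_hom Q R f | StrongInv => strong_hom Q R f end.

Record diagram (k : qcat) := Diagram {
  J_obj : Type;
  J_hom : J_obj -> J_obj -> Type;
  J_id : forall i, J_hom i i;
  J_comp : forall i j l, J_hom j l -> J_hom i j -> J_hom i l;
  J_id_l : forall i j (u : J_hom i j), J_comp i j j (J_id j) u = u;
  J_id_r : forall i j (u : J_hom i j), J_comp i i j u (J_id i) = u;
  J_assoc : forall i j l m (w : J_hom l m) (v : J_hom j l) (u : J_hom i j),
      J_comp i l m w (J_comp i j l v u) = J_comp i j m (J_comp j l m w v) u;
  D_obj : J_obj -> quantale;
  D_obj_in : forall i, cat_obj k (D_obj i);
  D_map : forall i j, J_hom i j -> D_obj i -> D_obj j;
  D_map_hom : forall i j (u : J_hom i j), cat_hom k (D_obj i) (D_obj j) (D_map i j u);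
  D_map_id : forall i x, D_map i i (J_id i) x = x;
  D_map_comp : forall i j l (v : J_hom j l) (u : J_hom i j) x,
      D_map i l (J_comp i j l v u) x = D_map j l v (D_map i j u x)
}.

Arguments J_obj {k}.
Arguments J_hom {k}.
Arguments D_obj {k}.
Arguments D_map {k} d {i j}.

Definition is_cocone {k} (d : diagram k) (C : quantale)
    (c : forall i, D_obj d i -> C) : Prop :=
  cat_obj k C /\
  (forall i, cat_hom k (D_obj d i) C (c i)) /\
  (forall i j (u : J_hom d i j) x, c j (D_map d u x) = c i x).

Definition is_colimit {k} (d : diagram k) (C : quantale)
    (c : forall i, D_obj d i -> C) : Prop :=
  is_cocone d C c /\
  forall (C' : quantale) (c' : forall i, D_obj d i -> C'),
    is_cocone d C' c' ->
    (exists h : C -> C', cat_hom k C C' h /\ forall i x, h (c i x) = c' i x) /\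
    (forall h1 h2 : C -> C',
       cat_hom k C C' h1 -> (forall i x, h1 (c i x) = c' i x) ->
       cat_hom k C C' h2 -> (forall i x, h2 (c i x) = c' i x) ->
       forall y, h1 y = h2 y).

(* A quantale "is a locale" (regarded as unital involutive quantale) when its
   multiplication is binary meet, its involution is trivial, and its unit is
   the top. *)
Definition is_locale (Q : quantale) : Prop :=
  (forall a b : Q, mul a b = meet a b) /\
  (forall a : Q, inv a = a) /\
  is_unit Q (top Q).

Definition compact (Q : quantale) : Prop :=
  forall S : Q -> Prop, top Q = sup S ->
    exists F : list Q, (forall x, In x F -> S x) /\
                       top Q = sup (fun x => In x F).

Definition well_inside {Q : quantale} (a' a : Q) : Prop :=
  exists b : Q, meet a' b = bot Q /\ join a b = top Q.

Definition regular (Q : quantale) : Prop :=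
  forall a : Q, a = sup (fun a' => well_inside a' a).

Definition compact_regular_locale (Q : quantale) : Prop :=
  is_locale Q /\ compact Q /\ regular Q.

(* Main.v *)
Require Import Defs.
From Stdlib Require Import List ProofIrrelevance FunctionalExtensionality PropExtensionality.

Section Gen.
Context {Q : quantale}.

Lemma leR (a : Q) : le a a. Proof. apply le_refl. Qed.
Lemma leT (a b c : Q) : le a b -> le b c -> le a c. Proof. apply le_trans. Qed.
Lemma leA (a b : Q) : le a b -> le b a -> a = b. Proof. apply le_antisym. Qed.

Lemma sup_ext (S T : Q -> Prop) : (forall x, S x <-> T x) -> sup S = sup T.
Proof.
  intro H; apply leA; apply sup_least; intros a Ha; apply sup_ub; apply H; exact Ha.
Qed.

Lemma sup_le_sup (S T : Q -> Prop) : (forall x, S x -> le x (sup T)) -> le (sup S) (sup T).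
Proof. intro H; apply sup_least; exact H. Qed.

Lemma bot_le (a : Q) : le (bot Q) a.
Proof. unfold bot; apply sup_least; intros x []. Qed.

Lemma le_top (a : Q) : le a (top Q).
Proof. unfold top; apply sup_ub; exact I. Qed.

Lemma join_l (a b : Q) : le a (join a b).
Proof. unfold join; apply sup_ub; auto. Qed.
Lemma join_r (a b : Q) : le b (join a b).
Proof. unfold join; apply sup_ub; auto. Qed.
Lemma join_least (a b c : Q) : le a c -> le b c -> le (join a b) c.
Proof. intros; unfold join; apply sup_least; intros x [->| ->]; auto. Qed.

Lemma join_eq (a b : Q) : le a b -> join a b = b.
Proof. intros; apply leA. apply join_least; auto; apply leR. apply join_r. Qed.

Lemma mul_mono_r (c a b : Q) : le a b -> le (mul c a) (mul c b).
Proof.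
  intro H. rewrite <- (join_eq a b H). unfold join. rewrite mul_sup_l.
  apply sup_ub. exists a; split; auto.
Qed.
Lemma mul_mono_l (c a b : Q) : le a b -> le (mul a c) (mul b c).
Proof.
  intro H. rewrite <- (join_eq a b H). unfold join. rewrite mul_sup_r.
  apply sup_ub. exists a; split; auto.
Qed.
Lemma mul_mono (a b c d : Q) : le a b -> le c d -> le (mul a c) (mul b d).
Proof. intros; eapply leT. apply mul_mono_l; eauto. apply mul_mono_r; auto. Qed.

Lemma mul_bot_l (a : Q) : mul (bot Q) a = bot Q.
Proof. apply leA; [|apply bot_le]. unfold bot at 1. rewrite mul_sup_r.
  apply sup_least. intros x [s [[] _]]. Qed.
Lemma mul_bot_r (a : Q) : mul a (bot Q) = bot Q.
Proof. apply leA; [|apply bot_le]. unfold bot at 1. rewrite mul_sup_l.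
  apply sup_least. intros x [s [[] _]]. Qed.

Lemma inv_mono (a b : Q) : le a b -> le (inv a) (inv b).
Proof.
  intro H. rewrite <- (join_eq a b H). unfold join. rewrite inv_sup.
  apply sup_ub. exists a; split; auto.
Qed.

Lemma unit_unique (e e' : Q) : is_unit Q e -> is_unit Q e' -> e = e'.
Proof. intros H H'. destruct (H e') as [H1 _]. destruct (H' e) as [_ H2].
  transitivity (mul e e'); [symmetry; exact H2 | exact H1]. Qed.

Definition lsup (l : list Q) : Q := sup (fun z => In z l).

Lemma lsup_nil : lsup nil = bot Q.
Proof. apply sup_ext; simpl; tauto. Qed.

Lemma lsup_cons (a : Q) l : lsup (a :: l) = join a (lsup l).
Proof. apply leA.
  - apply sup_least. intros x [->|H]. apply join_l. eapply leT; [|apply join_r]. apply sup_ub; auto.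
  - apply join_least. apply sup_ub; simpl; auto. apply sup_least; intros x H; apply sup_ub; simpl; auto.
Qed.

Lemma lsup_ub (l : list Q) x : In x l -> le x (lsup l).
Proof. intro; apply sup_ub; auto. Qed.

Lemma lsup_least (l : list Q) b : (forall x, In x l -> le x b) -> le (lsup l) b.
Proof. intro; apply sup_least; auto. Qed.

Lemma lsup_app (l1 l2 : list Q) : lsup (l1 ++ l2) = join (lsup l1) (lsup l2).
Proof. apply leA.
  - apply lsup_least; intros x Hx; apply in_app_or in Hx as [Hx|Hx].
    eapply leT; [apply lsup_ub; eauto| apply join_l].
    eapply leT; [apply lsup_ub; eauto| apply join_r].
  - apply join_least; apply lsup_least; intros x Hx; apply lsup_ub; apply in_or_app; auto.
Qed.

Lemma mul_lsup (y : Q) l : mul y (lsup l) = lsup (map (mul y) l).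
Proof. unfold lsup. rewrite mul_sup_l. apply sup_ext. intro x. rewrite in_map_iff.
  firstorder. Qed.
End Gen.

Section Hom.
Context {Q R : quantale} (f : Q -> R) (Hf : inv_qhom Q R f).

Lemma hom_sup S : f (sup S) = sup (img f S). Proof. apply Hf. Qed.
Lemma hom_mul a b : f (mul a b) = mul (f a) (f b). Proof. apply Hf. Qed.
Lemma hom_inv a : f (inv a) = inv (f a). Proof. apply Hf. Qed.

Lemma hom_mono a b : le a b -> le (f a) (f b).
Proof. intro H. rewrite <- (join_eq a b H). unfold join. rewrite hom_sup.
  apply sup_ub. exists a; split; auto. Qed.

Lemma hom_bot : f (bot Q) = bot R.
Proof. unfold bot. rewrite hom_sup. apply sup_ext. unfold img; firstorder. Qed.

Lemma hom_join a b : f (join a b) = join (f a) (f b).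
Proof. unfold join. rewrite hom_sup. apply sup_ext. unfold img. intro x; split.
  intros [y [[->| ->] ->]]; auto. intros [->| ->]; eauto. Qed.

Lemma hom_lsup l : f (lsup l) = lsup (map f l).
Proof. unfold lsup. rewrite hom_sup. apply sup_ext. intro x. rewrite in_map_iff. unfold img. firstorder. Qed.
End Hom.



Lemma mul_join {Q : quantale} (a b c : Q) : mul a (join b c) = join (mul a b) (mul a c).
Proof. unfold join. rewrite mul_sup_l. apply sup_ext. intro x; split.
  intros [s [[-> | ->] ->]]; auto. intros [-> | ->]; eauto. Qed.
Lemma mul_join_r {Q : quantale} (a b c : Q) : mul (join b c) a = join (mul b a) (mul c a).
Proof. unfold join. rewrite mul_sup_r. apply sup_ext. intro x; split.
  intros [s [[-> | ->] ->]]; auto. intros [-> | ->]; eauto. Qed.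

Section Loc.
Context {L : quantale} (HL : is_locale L).

Lemma meet_le_l (a b : L) : le (meet a b) a.
Proof. apply sup_least. intros x [H _]; exact H. Qed.
Lemma meet_le_r (a b : L) : le (meet a b) b.
Proof. apply sup_least. intros x [_ H]; exact H. Qed.
Lemma meet_glb (a b z : L) : le z a -> le z b -> le z (meet a b).
Proof. intros; apply sup_ub; auto. Qed.

Lemma lmul_meet (a b : L) : mul a b = meet a b. Proof. apply HL. Qed.
Lemma mul_le_l (a b : L) : le (mul a b) a. Proof. rewrite lmul_meet; apply meet_le_l. Qed.
Lemma mul_le_r (a b : L) : le (mul a b) b. Proof. rewrite lmul_meet; apply meet_le_r. Qed.
Lemma mul_glb (a b z : L) : le z a -> le z b -> le z (mul a b).
Proof. rewrite lmul_meet; apply meet_glb. Qed.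
Lemma mul_comm (a b : L) : mul a b = mul b a.
Proof. apply leA; apply mul_glb; first [apply mul_le_l | apply mul_le_r]. Qed.
Lemma mul_idem (a : L) : mul a a = a.
Proof. apply leA. apply mul_le_l. apply mul_glb; apply leR. Qed.
Lemma top_mul (a : L) : mul (top L) a = a. Proof. apply HL. Qed.
Lemma mul_top (a : L) : mul a (top L) = a. Proof. apply HL. Qed.
Lemma linv (a : L) : inv a = a. Proof. apply HL. Qed.

Lemma wi_iff (a' a : L) : well_inside a' a <-> exists b, mul a' b = bot L /\ join a b = top L.
Proof. unfold well_inside. setoid_rewrite lmul_meet. tauto. Qed.

Lemma wi_le (a' a : L) : well_inside a' a -> le a' a.
Proof. intro H; apply wi_iff in H as [b [H1 H2]].
  rewrite <- (mul_top a'). rewrite <- H2. rewrite mul_join. rewrite H1.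
  apply join_least. apply mul_le_r. apply bot_le. Qed.

Lemma wi_mono (x a' a y : L) : le x a' -> well_inside a' a -> le a y -> well_inside x y.
Proof. intros H1 H H2; apply wi_iff in H as [b [Hb1 Hb2]]; apply wi_iff. exists b; split.
  apply leA; [|apply bot_le]. rewrite <- Hb1. apply mul_mono_l; auto.
  apply leA; [apply le_top|]. rewrite <- Hb2. apply join_least.
  eapply leT; [exact H2| apply join_l]. apply join_r. Qed.

Lemma wi_bot (a : L) : well_inside (bot L) a.
Proof. apply wi_iff. exists (top L). split. apply mul_top.
  apply leA. apply le_top. apply join_r. Qed.

Lemma wi_top : well_inside (top L) (top L).
Proof. apply wi_iff. exists (bot L). split. apply mul_bot_r.
  apply leA. apply le_top. apply join_l. Qed.

Lemma wi_mul (x1 y1 x2 y2 : L) : well_inside x1 y1 -> well_inside x2 y2 ->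
  well_inside (mul x1 x2) (mul y1 y2).
Proof. intros H1 H2; apply wi_iff in H1 as [b1 [H11 H12]]; apply wi_iff in H2 as [b2 [H21 H22]].
  apply wi_iff. exists (join b1 b2). split.
  - apply leA; [|apply bot_le]. rewrite mul_join. apply join_least.
    + rewrite <- H11. apply mul_mono_l. apply mul_le_l.
    + rewrite <- H21. apply mul_mono_l. apply mul_le_r.
  - apply leA; [apply le_top|].
    assert (E : top L = mul (join y1 b1) (join y2 b2)) by (rewrite H12, H22; symmetry; apply mul_idem).
    rewrite E. rewrite mul_join_r, !mul_join. repeat apply join_least.
    + apply join_l.
    + eapply leT; [apply mul_le_r| ]. eapply leT; [apply join_r|apply join_r].
    + eapply leT; [apply mul_le_l| ]. eapply leT; [apply join_l|apply join_r].
    + eapply leT; [apply mul_le_l| ]. eapply leT; [apply join_l|apply join_r].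
Qed.

Lemma wi_join (x1 x2 a : L) : well_inside x1 a -> well_inside x2 a -> well_inside (join x1 x2) a.
Proof. intros H1 H2. assert (H := wi_mul _ _ _ _ H1 H2).
  apply wi_iff in H1 as [b1 [H11 H12]]; apply wi_iff in H2 as [b2 [H21 H22]].
  apply wi_iff. exists (mul b1 b2). split.
  - apply leA; [|apply bot_le]. rewrite mul_join_r. apply join_least.
    + rewrite <- H11. rewrite <- mul_assoc. apply mul_le_l.
    + rewrite <- H21. rewrite (mul_comm b1 b2), <- mul_assoc. apply mul_le_l.
  - apply leA; [apply le_top|].
    assert (E : top L = mul (join a b1) (join a b2)) by (rewrite H12, H22; symmetry; apply mul_idem).
    rewrite E. rewrite mul_join_r, !mul_join. repeat apply join_least.
    + eapply leT; [apply mul_le_l|apply join_l].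
    + eapply leT; [apply mul_le_l|apply join_l].
    + eapply leT; [apply mul_le_r|apply join_l].
    + apply join_r.
Qed.

Lemma wi_lsup (l : list L) a : (forall z, In z l -> well_inside z a) -> well_inside (lsup l) a.
Proof. induction l as [|x l IH]; intro H.
  - rewrite lsup_nil. apply wi_bot.
  - rewrite lsup_cons. apply wi_join. apply H; simpl; auto. apply IH; intros; apply H; simpl; auto.
Qed.

Lemma wi_key (HC : compact L) (HR : regular L) (y : L) (T : L -> Prop) :
  well_inside y (sup T) ->
  exists l, (forall z, In z l -> exists t, T t /\ well_inside z t) /\ le y (lsup l).
Proof.
  intro H. apply wi_iff in H as [b [Hb1 Hb2]].
  set (U := fun z => z = b \/ exists t, T t /\ well_inside z t).
  assert (Htop : top L = sup U).
  { apply leA; [|apply le_top]. rewrite <- Hb2. apply join_least.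
    - apply sup_least. intros t Ht. rewrite (HR t). apply sup_least. intros z Hz.
      apply sup_ub. right; eauto.
    - apply sup_ub. left; auto. }
  destruct (HC U Htop) as [F [HF1 HF2]].
  assert (G : forall F, (forall x, In x F -> U x) -> exists l,
     (forall z, In z l -> exists t, T t /\ well_inside z t) /\ le (mul y (lsup F)) (lsup l)).
  { clear HF1 HF2 F. intro F. induction F as [|z F IH]; intro HU.
    - exists nil. split. simpl; tauto. rewrite !lsup_nil. rewrite mul_bot_r. apply bot_le.
    - destruct IH as [l [Hl1 Hl2]]. intros; apply HU; simpl; auto.
      rewrite lsup_cons, mul_join. destruct (HU z (or_introl eq_refl)) as [->|Hz].
      + exists l. split; auto. apply join_least; auto. rewrite Hb1; apply bot_le.
      + exists (z :: l). split. intros w [<-|Hw]; auto.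
        rewrite lsup_cons. apply join_least. eapply leT; [apply mul_le_r|apply join_l].
        eapply leT; [exact Hl2|apply join_r]. }
  destruct (G F HF1) as [l [Hl1 Hl2]]. exists l. split; auto.
  rewrite <- (mul_top y). unfold lsup in HF2. fold (lsup F) in HF2. rewrite HF2. exact Hl2.
Qed.
End Loc.

Lemma hom_wi {L M : quantale} (HL : is_locale L) (HM : is_locale M) (f : L -> M)
  (Hf : inv_qhom L M f) (Ht : f (top L) = top M) (a' a : L) :
  well_inside a' a -> well_inside (f a') (f a).
Proof. intro H. apply (wi_iff HL) in H as [b [H1 H2]]. apply (wi_iff HM). exists (f b). split.
  rewrite <- (hom_mul f Hf), H1. apply (hom_bot f Hf).
  rewrite <- (hom_join f Hf), H2. exact Ht. Qed.

Implicit Types Q R S L : quantale.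

Definition isU (k : qcat) (Q : quantale) (z : Q) : Prop :=
  match k with UnitalInv => is_unit Q z | StrongInv => z = top Q end.

Lemma G1 k Q : cat_obj k Q -> exists u, isU k Q u.
Proof. destruct k; simpl; auto. eauto. Qed.

Lemma G2 k Q (u u' : Q) : isU k Q u -> isU k Q u' -> u = u'.
Proof. destruct k; simpl. apply unit_unique. intros -> ->; auto. Qed.

Lemma G3 k Q (u : Q) : cat_obj k Q -> isU k Q u -> mul u u = u.
Proof. destruct k; simpl. intros _ H; apply H. intros H ->; exact H. Qed.

Lemma inv_top Q : inv (top Q) = top Q.
Proof. apply leA. apply le_top. rewrite <- (inv_inv Q (top Q)) at 1. apply inv_mono. apply le_top. Qed.

Lemma G4 k Q (u : Q) : isU k Q u -> inv u = u.
Proof. destruct k; simpl.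
  - intro H. apply unit_unique; auto. intro a. split.
    + rewrite <- (inv_inv Q a) at 1. rewrite <- inv_mul. rewrite (proj2 (H (inv a))). apply inv_inv.
    + rewrite <- (inv_inv Q a) at 1. rewrite <- inv_mul. rewrite (proj1 (H (inv a))). apply inv_inv.
  - intros ->. apply inv_top.
Qed.

Lemma G5 k Q R f (u : Q) (u' : R) : cat_hom k Q R f -> isU k Q u -> isU k R u' -> f u = u'.
Proof. destruct k; simpl; intros [_ H]. apply H. intros -> ->; exact H. Qed.

Lemma G6 k L : is_locale L -> isU k L (top L).
Proof. destruct k; simpl; auto. intro H; apply H. Qed.

Lemma G8 k Q (e : Q) : isU k Q e -> mul e e = e -> cat_obj k Q.
Proof. destruct k; simpl. intros H _; exists e; exact H. intros He H; subst e; exact H. Qed.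

Lemma G9 k Q R f : inv_qhom Q R f -> (forall e e', isU k Q e -> isU k R e' -> f e = e') ->
  cat_hom k Q R f.
Proof. destruct k; simpl; intros H1 H2; split; auto. apply H2; reflexivity. Qed.

Lemma hom_inv_qhom k Q R f : cat_hom k Q R f -> inv_qhom Q R f.
Proof. intros [H _]; exact H. Qed.

Lemma inv_qhom_comp Q R S f g : inv_qhom Q R f -> inv_qhom R S g -> inv_qhom Q S (fun x => g (f x)).
Proof. intros [F1 [F2 F3]] [H1 [H2 H3]]. split; [|split].
  - intro T. rewrite F1, H1. apply sup_ext. unfold img; intro x; split.
    + intros [y [[z [Hz ->]] ->]]; eauto.
    + intros [z [Hz ->]]; eauto.
  - intros; rewrite F2, H2; auto.
  - intros; rewrite F3, H3; auto.
Qed.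

Lemma G12 k Q R S f g (eR : R) : cat_hom k Q R f -> cat_hom k R S g -> isU k R eR ->
  cat_hom k Q S (fun x => g (f x)).
Proof. intros Hf Hg He. apply G9. apply inv_qhom_comp; eapply hom_inv_qhom; eauto.
  intros e e' H1 H2. rewrite (G5 _ _ _ _ _ _ Hf H1 He). eapply G5; eauto. Qed.

Lemma G13 k Q : cat_hom k Q Q (fun x => x).
Proof. apply G9. split; [|split]; auto. intro S; apply sup_ext; unfold img; firstorder congruence.
  apply G2. Qed.

Lemma isU_intro k Q (e : Q) : (k = UnitalInv -> is_unit Q e) -> (k = StrongInv -> e = top Q) -> isU k Q e.
Proof. destruct k; simpl; auto. Qed.
Lemma isU_unital k Q (e : Q) : k = UnitalInv -> isU k Q e -> is_unit Q e.
Proof. intros ->; auto. Qed.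
Lemma isU_strong k Q (e : Q) : k = StrongInv -> isU k Q e -> e = top Q.
Proof. intros ->; auto. Qed.

Section Ideals.
Context {L : quantale} (HL : is_locale L).

Definition ideal (I : L -> Prop) : Prop :=
  I (bot L) /\ (forall x y, le x y -> I y -> I x) /\ (forall x y, I x -> I y -> I (join x y)).

Lemma ideal_lsup I l : ideal I -> (forall z, In z l -> I z) -> I (lsup l).
Proof. intros [H0 [H1 H2]]. induction l as [|a l IH]; intro H.
  - rewrite lsup_nil; auto.
  - rewrite lsup_cons. apply H2. apply H; simpl; auto. apply IH; intros; apply H; simpl; auto.
Qed.

Definition Kc := {I : L -> Prop | ideal I}.

Lemma Keq (I J : Kc) : (forall y, proj1_sig I y <-> proj1_sig J y) -> I = J.
Proof. destruct I as [I HI], J as [J HJ]; simpl; intro H.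
  assert (I = J) by (apply functional_extensionality; intro; apply propositional_extensionality; auto).
  subst J. f_equal. apply proof_irrelevance. Qed.

Definition Ksup_set (T : Kc -> Prop) : L -> Prop := fun y =>
  exists l, (forall z, In z l -> exists J, T J /\ proj1_sig J z) /\ le y (lsup l).

Lemma Ksup_ideal T : ideal (Ksup_set T).
Proof. split; [|split].
  - exists nil. split. simpl; tauto. apply bot_le.
  - intros x y H [l [H1 H2]]. exists l. split; auto. eapply leT; eauto.
  - intros x y [l1 [H1 H2]] [l2 [H3 H4]]. exists (l1 ++ l2). split.
    + intros z Hz; apply in_app_or in Hz as [Hz|Hz]; auto.
    + rewrite lsup_app. apply join_least. eapply leT; [eauto|apply join_l]. eapply leT; [eauto|apply join_r].
Qed.

Definition Ksup (T : Kc -> Prop) : Kc := exist _ (Ksup_set T) (Ksup_ideal T).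

Lemma Kmul_ideal (I J : Kc) : ideal (fun y => proj1_sig I y /\ proj1_sig J y).
Proof. destruct I as [I [I0 [I1 I2]]], J as [J [J0 [J1 J2]]]; simpl. split; [|split]; firstorder. Qed.

Definition Kmul (I J : Kc) : Kc := exist _ _ (Kmul_ideal I J).
Definition Kle (I J : Kc) : Prop := forall y, proj1_sig I y -> proj1_sig J y.

Lemma Kle_antisym I J : Kle I J -> Kle J I -> I = J.
Proof. intros; apply Keq; intro; split; auto. Qed.

Lemma Ksup_ub T a : T a -> Kle a (Ksup T).
Proof. intros H y Hy. exists (y :: nil). split.
  intros z [<-|[]]; eauto. apply lsup_ub; simpl; auto. Qed.

Lemma Ksup_least T b : (forall a, T a -> Kle a b) -> Kle (Ksup T) b.
Proof. intros H y [l [H1 H2]]. destruct b as [B HB]; simpl in *.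
  pose proof HB as [B0 [B1 B2]]. apply (B1 _ _ H2). apply ideal_lsup. auto.
  intros z Hz. destruct (H1 z Hz) as [J [HJ Hz']]. exact (H J HJ z Hz'). Qed.

Lemma Kmul_sup_l a T : Kmul a (Ksup T) = Ksup (fun y => exists s, T s /\ y = Kmul a s).
Proof. apply Keq; intro y; simpl; split.
  - intros [Ha [l [H1 H2]]]. exists (map (mul y) l). split.
    + intros z' Hz'. apply in_map_iff in Hz' as [z [<- Hz]]. destruct (H1 z Hz) as [J [HJ HzJ]].
      exists (Kmul a J). split. eauto. simpl. destruct a as [A [A0 [A1 A2]]], J as [J' [J0 [J1 J2]]]; simpl in *.
      split. apply (A1 _ y); auto. apply mul_le_l; auto. apply (J1 _ z); auto. apply mul_le_r; auto.
    + rewrite <- mul_lsup. rewrite <- (mul_idem HL y) at 1. apply mul_mono_r; auto.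
  - intros [l [H1 H2]]. split.
    + destruct a as [A HA]; simpl in *. pose proof HA as [A0 [A1 A2]]. apply (A1 _ _ H2).
      apply ideal_lsup. auto. intros z Hz. destruct (H1 z Hz) as [J [[s [Hs ->]] [Hz1 _]]]. exact Hz1.
    + exists l. split; auto. intros z Hz. destruct (H1 z Hz) as [J [[s [Hs ->]] [_ Hz2]]]. eauto.
Qed.

Lemma Kmul_comm a b : Kmul a b = Kmul b a.
Proof. apply Keq; simpl; tauto. Qed.

Lemma Ksup_ext T T' : (forall x, T x <-> T' x) -> Ksup T = Ksup T'.
Proof. intro H. apply Keq. intro y; simpl. unfold Ksup_set. split; intros [l [H1 H2]]; exists l; split; auto;
  intros z Hz; destruct (H1 z Hz) as [J [HJ HJz]]; exists J; split; auto; apply H; auto. Qed.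

Lemma Kmul_sup_r a T : Kmul (Ksup T) a = Ksup (fun y => exists s, T s /\ y = Kmul s a).
Proof. rewrite Kmul_comm, Kmul_sup_l. apply Ksup_ext. intro x. split; intros [s [Hs ->]]; exists s; split; auto; apply Kmul_comm. Qed.

Lemma Kmul_assoc a b c : Kmul (Kmul a b) c = Kmul a (Kmul b c).
Proof. apply Keq; simpl; tauto. Qed.

Lemma Kinv_sup T : Ksup T = Ksup (fun y => exists s, T s /\ y = s).
Proof. apply Ksup_ext. intro x; split. eauto. intros [s [Hs ->]]; auto. Qed.

Definition Kq : quantale := {|
  car := Kc; le := Kle; sup := Ksup; mul := Kmul; inv := fun x => x;
  le_refl := fun a y H => H;
  le_trans := fun a b c H1 H2 y H => H2 y (H1 y H);
  le_antisym := Kle_antisym;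
  sup_ub := Ksup_ub; sup_least := Ksup_least;
  mul_assoc := Kmul_assoc; mul_sup_l := Kmul_sup_l; mul_sup_r := Kmul_sup_r;
  inv_inv := fun a => eq_refl; inv_mul := fun a b => Kmul_comm a b; inv_sup := Kinv_sup |}.

Definition Kfull : Kq := exist _ (fun _ => True) (conj I (conj (fun _ _ _ _ => I) (fun _ _ _ _ => I))).

Lemma Ktop : top Kq = Kfull.
Proof. apply Keq; intro y; simpl; split; auto. intros _. exists (y :: nil). split.
  intros z [<-|[]]. exists Kfull; simpl; auto. apply lsup_ub; simpl; auto. Qed.

Lemma K_isU k : isU k Kq Kfull.
Proof. apply isU_intro. intros _ a; split; apply Keq; simpl; tauto. intros _; symmetry; apply Ktop. Qed.

Lemma K_obj k : cat_obj k Kq.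
Proof. apply (G8 k Kq Kfull). apply K_isU. apply Keq; simpl; tauto. Qed.
End Ideals.

Section Phi.
Context {D L : quantale} (HD : is_locale D) (HDc : compact D) (HDr : regular D) (HL : is_locale L)
  (f : D -> L) (Hf : inv_qhom D L f) (Hft : f (top D) = top L).

Definition phi_set (a : D) : L -> Prop := fun y => exists x, well_inside x a /\ le y (f x).

Lemma phi_ideal a : ideal (phi_set a).
Proof. split; [|split].
  - exists (bot D). split. apply (wi_bot HD). apply bot_le.
  - intros x y H [z [H1 H2]]. exists z; split; auto. eapply leT; eauto.
  - intros x y [z1 [H1 H2]] [z2 [H3 H4]]. exists (join z1 z2). split. apply (wi_join HD); auto.
    rewrite (hom_join f Hf). apply join_least. eapply leT; [eauto|apply join_l]. eapply leT; [eauto|apply join_r].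
Qed.

Definition phi (a : D) : Kq HL := exist _ (phi_set a) (phi_ideal a).

Lemma phi_hom : inv_qhom D (Kq HL) phi.
Proof. split; [|split].
  - intro T. apply Keq. intro y. simpl. unfold Ksup_set, phi_set. split.
    + intros [x [Hx Hy]]. destruct (wi_key HD HDc HDr x T Hx) as [l [H1 H2]].
      exists (map f l). split.
      * intros z' Hz'. apply in_map_iff in Hz' as [z [<- Hz]]. destruct (H1 z Hz) as [t [Ht Hzt]].
        exists (phi t). split. exists t; split; auto. simpl. exists z; split; auto. apply leR.
      * eapply leT; [exact Hy|]. rewrite <- (hom_lsup f Hf). apply (hom_mono f Hf). exact H2.
    + intros [l [H1 H2]]. pose proof (phi_ideal (sup T)) as HI. pose proof HI as [_ [HI1 _]].
      apply (HI1 _ _ H2). apply ideal_lsup; auto. intros z Hz. destruct (H1 z Hz) as [J [[t [Ht ->]] Hz']].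
      destruct Hz' as [x [Hx Hzx]]. exists x. split; auto. eapply (wi_mono HD); [apply leR|exact Hx|]. apply sup_ub; auto.
  - intros a b. apply Keq. intro y. simpl. unfold phi_set. split.
    + intros [x [Hx Hy]]. split; exists x; split; auto.
      eapply (wi_mono HD); [apply leR|exact Hx|apply (mul_le_l HD)].
      eapply (wi_mono HD); [apply leR|exact Hx|apply (mul_le_r HD)].
    + intros [[x1 [H1 H2]] [x2 [H3 H4]]]. exists (mul x1 x2). split. apply (wi_mul HD); auto.
      rewrite (hom_mul f Hf). apply (mul_glb HL); auto.
  - intro a. simpl. rewrite (linv HD). reflexivity.
Qed.

Lemma phi_top : phi (top D) = Kfull HL.
Proof. apply Keq; intro y; simpl; split; auto. intros _. exists (top D). split. apply (wi_top HD).
  rewrite Hft. apply le_top. Qed.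

Lemma phi_cat k : cat_hom k D (Kq HL) phi.
Proof. apply G9. apply phi_hom. intros e e' H1 H2.
  rewrite (G2 _ _ _ _ H1 (G6 k D HD)). rewrite (G2 _ _ _ _ H2 (K_isU HL k)). apply phi_top. Qed.
End Phi.

Lemma comm_core {Q : quantale} (u p q x' s x y : Q) :
  mul x' u = x' -> le x' u -> mul p q = bot Q -> join y q = u -> mul u p = p -> le p u ->
  mul s u = s -> mul s x' = bot Q -> join x s = u -> mul u u = u -> mul u y = y -> mul p u = p ->
  le (mul p x') (mul x y).
Proof. intros h1 h2 h3 h4 h5 h6 h7 h8 h9 h10 h11 h12.
  assert (C1 : le (mul p x') (mul (mul p x') y)).
  { assert (E: mul p x' = mul (mul p x') u) by (rewrite mul_assoc, h1; reflexivity).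
    rewrite E at 1. rewrite <- h4. rewrite mul_join. apply join_least.
    - apply leR.
    - eapply leT; [|apply bot_le]. rewrite <- h3. eapply leT. apply mul_mono_l. apply mul_mono_r. exact h2.
      rewrite h12. apply leR. }
  assert (C2 : le (mul p x') (mul x (mul p x'))).
  { assert (E: mul p x' = mul u (mul p x')) by (rewrite <- mul_assoc, h5; reflexivity).
    rewrite E at 1. rewrite <- h9. rewrite mul_join_r. apply join_least.
    - apply leR.
    - eapply leT; [|apply bot_le]. rewrite <- h8. rewrite <- mul_assoc. eapply leT. apply mul_mono_l. apply mul_mono_r. exact h6.
      rewrite h7. apply leR. }
  eapply leT; [exact C2|]. eapply leT. apply mul_mono_r. exact C1.
  apply mul_mono_r. rewrite <- h11 at 2. apply mul_mono_l.
  rewrite <- h10. apply mul_mono; auto.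
Qed.

Section Main.
Context (k : qcat) (d : diagram k) (hD : forall i : J_obj d, compact_regular_locale (D_obj d i))
  (C : quantale) (c : forall i, D_obj d i -> C) (Hcol : is_colimit d C c)
  (u : C) (Hu : isU k C u).

Lemma LD i : is_locale (D_obj d i). Proof. apply hD. Qed.
Lemma RD i : regular (D_obj d i). Proof. apply hD. Qed.
Lemma KD i : compact (D_obj d i). Proof. apply hD. Qed.
Lemma Cobj : cat_obj k C. Proof. apply Hcol. Qed.
Lemma ccat i : cat_hom k _ _ (c i). Proof. apply Hcol. Qed.
Lemma ch i : inv_qhom _ _ (c i). Proof. apply ccat. Qed.
Lemma ccompat i j (v : J_hom d i j) x : c j (D_map d v x) = c i x. Proof. apply Hcol. Qed.

Lemma c_top i : c i (top _) = u.
Proof. eapply G5. apply ccat. apply G6, LD. exact Hu. Qed.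
Lemma uu : mul u u = u. Proof. apply (G3 k). apply Cobj. exact Hu. Qed.
Lemma uinv : inv u = u. Proof. apply (G4 k). exact Hu. Qed.
Lemma img_u_r i a : mul (c i a) u = c i a.
Proof. rewrite <- (c_top i), <- (hom_mul _ (ch i)), (mul_top (LD i)). reflexivity. Qed.
Lemma img_u_l i a : mul u (c i a) = c i a.
Proof. rewrite <- (c_top i), <- (hom_mul _ (ch i)), (top_mul (LD i)). reflexivity. Qed.
Lemma img_le_u i a : le (c i a) u.
Proof. rewrite <- (c_top i). apply (hom_mono _ (ch i)). apply le_top. Qed.

Lemma img_wi i (a' a : D_obj d i) : well_inside a' a ->
  exists s, mul (c i a') (c i s) = bot C /\ mul (c i s) (c i a') = bot C /\ join (c i a) (c i s) = u.
Proof. intro H. apply (wi_iff (LD i)) in H as [b [H1 H2]]. exists b. split; [|split].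
  - rewrite <- (hom_mul _ (ch i)), H1. apply (hom_bot _ (ch i)).
  - rewrite <- (hom_mul _ (ch i)), (mul_comm (LD i)), H1. apply (hom_bot _ (ch i)).
  - rewrite <- (hom_join _ (ch i)), H2. apply c_top.
Qed.

Lemma comm_le i j (a : D_obj d i) (b : D_obj d j) :
  le (mul (c j b) (c i a)) (mul (c i a) (c j b)).
Proof.
  set (x := c i a). set (y := c j b).
  assert (Ea : le (c i a) (c i (sup (fun a' => well_inside a' a)))).
  { apply (hom_mono _ (ch i)). rewrite <- (RD i a). apply leR. }
  assert (Eb : le (c j b) (c j (sup (fun b' => well_inside b' b)))).
  { apply (hom_mono _ (ch j)). rewrite <- (RD j b). apply leR. }
  rewrite (hom_sup _ (ch i)) in Ea. rewrite (hom_sup _ (ch j)) in Eb.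
  eapply leT. apply mul_mono; [exact Eb|exact Ea].
  rewrite mul_sup_r. apply sup_least. intros w [p [[b' [Hb' ->]] ->]].
  rewrite mul_sup_l. apply sup_least. intros w [x' [[a' [Ha' ->]] ->]].
  destruct (img_wi _ _ _ Ha') as [s [Hs1 [Hs2 Hs3]]].
  destruct (img_wi _ _ _ Hb') as [q [Hq1 [Hq2 Hq3]]].
  apply (comm_core u (c j b') (c j q) (c i a') (c i s) (c i a) (c j b)); auto.
  apply img_u_r. apply img_le_u. apply img_u_l. apply img_le_u. apply img_u_r. apply uu. apply img_u_l. apply img_u_r.
Qed.

Lemma img_comm i j (a : D_obj d i) (b : D_obj d j) : mul (c i a) (c j b) = mul (c j b) (c i a).
Proof. apply leA; apply comm_le. Qed.

Inductive M : C -> Prop :=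
| M_img i a : M (c i a)
| M_u z : isU k C z -> M z
| M_mul x y : M x -> M y -> M (mul x y).

Lemma M_uprop m : M m -> le m u /\ mul m u = m /\ mul u m = m.
Proof. induction 1 as [i a|z Hz|x y Hx [IH1 [IH2 IH3]] Hy [IJ1 [IJ2 IJ3]]].
  - split; [|split]. apply img_le_u. apply img_u_r. apply img_u_l.
  - rewrite (G2 _ _ _ _ Hz Hu). split; [apply leR|split; apply uu].
  - split; [|split].
    + rewrite <- uu. apply mul_mono; auto.
    + rewrite mul_assoc, IJ2; auto.
    + rewrite <- mul_assoc, IH3; auto.
Qed.

Lemma M_comm_img m : M m -> forall i a, mul m (c i a) = mul (c i a) m.
Proof. induction 1 as [j b|z Hz|x y Hx IHx Hy IHy]; intros i a.
  - apply img_comm.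
  - rewrite (G2 _ _ _ _ Hz Hu). rewrite img_u_l, img_u_r. reflexivity.
  - rewrite mul_assoc, IHy, <- mul_assoc, IHx, mul_assoc. reflexivity.
Qed.

Lemma M_comm m m' : M m -> M m' -> mul m m' = mul m' m.
Proof. intros Hm Hm'. induction Hm' as [j b|z Hz|x y Hx IHx Hy IHy].
  - apply M_comm_img; auto.
  - rewrite (G2 _ _ _ _ Hz Hu). destruct (M_uprop m Hm) as [_ [H1 H2]]. rewrite H1, H2; auto.
  - rewrite <- mul_assoc, IHx, mul_assoc, IHy, mul_assoc. reflexivity.
Qed.

Lemma M_idem m : M m -> mul m m = m.
Proof. intro Hm. induction Hm as [j b|z Hz|x y Hx IHx Hy IHy].
  - rewrite <- (hom_mul _ (ch j)), (mul_idem (LD j)). reflexivity.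
  - rewrite (G2 _ _ _ _ Hz Hu). apply uu.
  - rewrite mul_assoc. rewrite <- (mul_assoc _ y x y). rewrite (M_comm y x Hy Hx).
    rewrite mul_assoc, IHy, <- mul_assoc, IHx. reflexivity.
Qed.

Lemma M_inv m : M m -> inv m = m.
Proof. intro Hm. induction Hm as [j b|z Hz|x y Hx IHx Hy IHy].
  - rewrite <- (hom_inv _ (ch j)), (linv (LD j)). reflexivity.
  - rewrite (G2 _ _ _ _ Hz Hu). apply uinv.
  - rewrite inv_mul, IHx, IHy. apply M_comm; auto.
Qed.

Definition Pg (x : C) : Prop := le x (sup (fun m => M m /\ le m x)).

Lemma Pg_M m : M m -> Pg m.
Proof. intro H; apply sup_ub; split; auto; apply leR. Qed.

Lemma Pg_sup T : (forall t, T t -> Pg t) -> Pg (sup T).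
Proof. intro H. apply sup_least. intros t Ht. eapply leT. apply H; auto.
  apply sup_le_sup. intros m [Hm Hmt]. apply sup_ub. split; auto. eapply leT; [exact Hmt|]. apply sup_ub; auto. Qed.

Lemma Pg_mul x y : Pg x -> Pg y -> Pg (mul x y).
Proof. intros Hx Hy. unfold Pg. eapply leT. apply mul_mono; [exact Hx|exact Hy].
  rewrite mul_sup_r. apply sup_least. intros w [s [[Hs Hsx] ->]].
  rewrite mul_sup_l. apply sup_least. intros w [t [[Ht Hty] ->]].
  apply sup_ub. split. apply M_mul; auto. apply mul_mono; auto. Qed.

Lemma Pg_inv x : Pg x -> Pg (inv x).
Proof. intro Hx. unfold Pg. eapply leT. apply inv_mono; exact Hx. rewrite inv_sup.
  apply sup_least. intros w [s [[Hs Hsx] ->]]. apply sup_ub. rewrite (M_inv s Hs). split; auto.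
  rewrite <- (M_inv s Hs). apply inv_mono; auto. Qed.

Definition Sc := {x : C | Pg x}.
Lemma sig_eq (a b : Sc) : proj1_sig a = proj1_sig b -> a = b.
Proof. destruct a as [a Ha], b as [b Hb]; simpl; intros ->. f_equal; apply proof_irrelevance. Qed.

Lemma Pg_img (SS : Sc -> Prop) t : img (@proj1_sig _ _) SS t -> Pg t.
Proof. intros [x [_ ->]]. apply proj2_sig. Qed.

Definition Sq_sup (SS : Sc -> Prop) : Sc :=
  exist _ (sup (img (@proj1_sig _ _) SS)) (Pg_sup _ (Pg_img SS)).
Definition Sq_mul (a b : Sc) : Sc := exist _ (mul (proj1_sig a) (proj1_sig b)) (Pg_mul _ _ (proj2_sig a) (proj2_sig b)).
Definition Sq_inv (a : Sc) : Sc := exist _ (inv (proj1_sig a)) (Pg_inv _ (proj2_sig a)).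
Definition Sq_le (a b : Sc) : Prop := le (proj1_sig a) (proj1_sig b).

Lemma Sq_mul_sup_l a SS : Sq_mul a (Sq_sup SS) = Sq_sup (fun y => exists s, SS s /\ y = Sq_mul a s).
Proof. apply sig_eq; simpl. rewrite mul_sup_l. apply sup_ext. unfold img. intro x; split.
  - intros [y [[z [Hz ->]] ->]]. exists (Sq_mul a z). split; eauto.
  - intros [y [[z [Hz ->]] ->]]. simpl. eauto.
Qed.
Lemma Sq_mul_sup_r a SS : Sq_mul (Sq_sup SS) a = Sq_sup (fun y => exists s, SS s /\ y = Sq_mul s a).
Proof. apply sig_eq; simpl. rewrite mul_sup_r. apply sup_ext. unfold img. intro x; split.
  - intros [y [[z [Hz ->]] ->]]. exists (Sq_mul z a). split; eauto.
  - intros [y [[z [Hz ->]] ->]]. simpl. eauto.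
Qed.
Lemma Sq_inv_sup SS : Sq_inv (Sq_sup SS) = Sq_sup (fun y => exists s, SS s /\ y = Sq_inv s).
Proof. apply sig_eq; simpl. rewrite inv_sup. apply sup_ext. unfold img. intro x; split.
  - intros [y [[z [Hz ->]] ->]]. exists (Sq_inv z). split; eauto.
  - intros [y [[z [Hz ->]] ->]]. simpl. eauto.
Qed.

Lemma Sq_assoc a b c0 : Sq_mul (Sq_mul a b) c0 = Sq_mul a (Sq_mul b c0).
Proof. apply sig_eq; simpl; apply mul_assoc. Qed.
Lemma Sq_inv_inv a : Sq_inv (Sq_inv a) = a.
Proof. apply sig_eq; simpl; apply inv_inv. Qed.
Lemma Sq_inv_mul a b : Sq_inv (Sq_mul a b) = Sq_mul (Sq_inv b) (Sq_inv a).
Proof. apply sig_eq; simpl; apply inv_mul. Qed.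
Lemma Sq_antisym a b : Sq_le a b -> Sq_le b a -> a = b.
Proof. intros; apply sig_eq; apply leA; auto. Qed.
Lemma Sq_sup_ub SS a : SS a -> Sq_le a (Sq_sup SS).
Proof. intro H; apply sup_ub. exists a; auto. Qed.
Lemma Sq_sup_least SS b : (forall a, SS a -> Sq_le a b) -> Sq_le (Sq_sup SS) b.
Proof. intro H; apply sup_least. intros t [x [Hx ->]]. apply H; auto. Qed.

Definition Sq : quantale := {|
  car := Sc; le := Sq_le; sup := Sq_sup; mul := Sq_mul; inv := Sq_inv;
  le_refl := fun a => le_refl C (proj1_sig a);
  le_trans := fun a b c => le_trans C (proj1_sig a) (proj1_sig b) (proj1_sig c);
  le_antisym := Sq_antisym;
  sup_ub := Sq_sup_ub;
  sup_least := Sq_sup_least;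
  mul_assoc := Sq_assoc;
  mul_sup_l := Sq_mul_sup_l; mul_sup_r := Sq_mul_sup_r;
  inv_inv := Sq_inv_inv;
  inv_mul := Sq_inv_mul;
  inv_sup := Sq_inv_sup |}.

Definition Su : Sq := exist _ u (Pg_M u (M_u u Hu)).

Lemma Sq_isU : isU k Sq Su.
Proof. apply isU_intro.
  - intros Hk a. pose proof (isU_unital _ _ _ Hk Hu) as H. split; apply sig_eq; simpl; apply H.
  - intros Hk. pose proof (isU_strong _ _ _ Hk Hu) as H. apply sig_eq. simpl. apply leA.
    + apply sup_ub. exists Su; split; auto.
    + rewrite H. apply le_top.
Qed.

Lemma Sq_obj : cat_obj k Sq.
Proof. apply (G8 _ _ Su Sq_isU). apply sig_eq. simpl. apply uu. Qed.

Definition cS i (a : D_obj d i) : Sq := exist _ (c i a) (Pg_M _ (M_img i a)).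

Lemma cS_cat i : cat_hom k _ Sq (cS i).
Proof. apply G9.
  - split; [|split].
    + intro T. apply sig_eq. simpl. rewrite (hom_sup _ (ch i)). apply sup_ext. unfold img. intro x; split.
      * intros [y [Hy ->]]. exists (cS i y). split; eauto.
      * intros [y [[z [Hz ->]] ->]]. simpl. eauto.
    + intros; apply sig_eq; simpl; apply (hom_mul _ (ch i)).
    + intros; apply sig_eq; simpl; apply (hom_inv _ (ch i)).
  - intros e e' H1 H2. rewrite (G2 _ _ _ _ H2 Sq_isU). apply sig_eq. simpl.
    eapply G5. apply ccat. exact H1. exact Hu.
Qed.

Lemma incl_cat : cat_hom k Sq C (@proj1_sig _ _).
Proof. apply G9.
  - split; [|split]; auto.
  - intros e e' H1 H2. rewrite (G2 _ _ _ _ H1 Sq_isU). simpl. apply (G2 _ _ _ _ Hu H2).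
Qed.

Lemma gen (x : C) : Pg x.
Proof.
  destruct Hcol as [Hcoc Huniv].
  assert (Hc' : is_cocone d Sq cS).
  { split; [apply Sq_obj|split]. apply cS_cat. intros i j v a. apply sig_eq. simpl. apply ccompat. }
  destruct (Huniv Sq cS Hc') as [[h [Hh1 Hh2]] _].
  destruct (Huniv C c Hcoc) as [_ Huq].
  assert (E : proj1_sig (h x) = x).
  { apply (Huq (fun y => proj1_sig (h y)) (fun y => y)).
    - eapply G12. exact Hh1. apply incl_cat. apply Sq_isU.
    - intros i a. rewrite Hh2. reflexivity.
    - apply G13.
    - reflexivity. }
  rewrite <- E. apply proj2_sig.
Qed.

Lemma genT (x : C) : le (sup (fun m => M m /\ le m x)) x.
Proof. apply sup_least. intros m [_ H]; exact H. Qed.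

Lemma u_top : u = top C.
Proof. apply leA. apply le_top. eapply leT. apply gen. apply sup_least. intros m [Hm _]. apply (M_uprop m Hm). Qed.

Lemma u_mul_sup T : (forall m, T m -> M m) -> mul u (sup T) = sup T /\ mul (sup T) u = sup T.
Proof. intro H. split.
  - rewrite mul_sup_l. apply sup_ext. intro x; split.
    + intros [s [Hs ->]]. rewrite (proj2 (proj2 (M_uprop s (H s Hs)))). auto.
    + intro Hx. exists x. split; auto. symmetry. apply (M_uprop x (H x Hx)).
  - rewrite mul_sup_r. apply sup_ext. intro x; split.
    + intros [s [Hs ->]]. rewrite (proj1 (proj2 (M_uprop s (H s Hs)))). auto.
    + intro Hx. exists x. split; auto. symmetry. apply (M_uprop x (H x Hx)).
Qed.

Lemma C_unit : is_unit C (top C).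
Proof. rewrite <- u_top. intro a.
  assert (H1 := gen a). assert (H2 := genT a).
  destruct (u_mul_sup (fun m => M m /\ le m a)) as [E1 E2]. intros m [Hm _]; exact Hm.
  split; apply leA.
  - eapply leT. apply mul_mono_r. exact H1. rewrite E1. exact H2.
  - eapply leT. exact H1. rewrite <- E1. apply mul_mono_r. exact H2.
  - eapply leT. apply mul_mono_l. exact H1. rewrite E2. exact H2.
  - eapply leT. exact H1. rewrite <- E2. apply mul_mono_l. exact H2.
Qed.

Lemma C_locale : is_locale C.
Proof. split; [|split]; [| |exact C_unit].
  - intros a b. apply leA.
    + apply sup_ub. split.
      * rewrite <- (proj2 (C_unit a)) at 2. apply mul_mono_r. apply le_top.
      * rewrite <- (proj1 (C_unit b)) at 2. apply mul_mono_l. apply le_top.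
    + eapply leT. apply gen. apply sup_least. intros m [Hm Hmz]. rewrite <- (M_idem m Hm).
      apply mul_mono; (eapply leT; [exact Hmz|]); apply sup_least; intros x [Hx1 Hx2]; auto.
  - assert (H : forall a : C, le a (inv a)).
    { intro a. eapply leT. apply gen. apply sup_least. intros m [Hm Hma]. rewrite <- (M_inv m Hm).
      apply inv_mono; auto. }
    intro a. apply leA; auto. rewrite <- (inv_inv C a) at 2. apply inv_mono; auto.
Qed.

Lemma c_topC i : c i (top _) = top C.
Proof. rewrite c_top. apply u_top. Qed.

Lemma M_reg m : M m -> le m (sup (fun w => well_inside w m)).
Proof. induction 1 as [i a|z Hz|x y Hx IHx Hy IHy].
  - assert (Ea : le (c i a) (c i (sup (fun a' => well_inside a' a)))).
    { apply (hom_mono _ (ch i)). rewrite <- (RD i a). apply leR. }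
    eapply leT. exact Ea. rewrite (hom_sup _ (ch i)). apply sup_least. intros w [a' [Ha' ->]]. apply sup_ub.
    apply (hom_wi (LD i) C_locale); auto. apply ch. apply c_topC.
  - rewrite (G2 _ _ _ _ Hz Hu), u_top. apply sup_ub. apply (wi_top C_locale).
  - eapply leT. apply mul_mono; [exact IHx|exact IHy].
    rewrite mul_sup_r. apply sup_least. intros w [p [Hp ->]].
    rewrite mul_sup_l. apply sup_least. intros w [q [Hq ->]].
    apply sup_ub. apply (wi_mul C_locale); auto.
Qed.

Lemma C_regular : regular C.
Proof. intro a. apply leA.
  - eapply leT. apply gen. apply sup_least. intros m [Hm Hma]. eapply leT. apply M_reg; auto.
    apply sup_least. intros w Hw. apply sup_ub. eapply (wi_mono C_locale); [apply leR|exact Hw|exact Hma].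
  - apply sup_least. intros w Hw. apply (wi_le C_locale); auto.
Qed.

Definition ph i : D_obj d i -> Kq C_locale := phi (LD i) C_locale (c i) (ch i).
Lemma ph_cat i : cat_hom k _ _ (ph i).
Proof. exact (phi_cat (LD i) (KD i) (RD i) C_locale (c i) (ch i) (c_topC i) k). Qed.

Lemma ph_compat i j (v : J_hom d i j) a : ph j (D_map d v a) = ph i a.
Proof.
  assert (Hv : cat_hom k _ _ (D_map d v)) by apply D_map_hom.
  assert (Hvh : inv_qhom _ _ (D_map d v)) by apply Hv.
  assert (Hvt : D_map d v (top _) = top _).
  { eapply G5. exact Hv. apply G6, LD. apply G6, LD. }
  apply Keq. intro y. simpl. unfold phi_set. split.
  - intros [x [Hx Hy]].
    assert (Hx' : well_inside x (sup (img (D_map d v) (fun a' => well_inside a' a)))).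
    { eapply (wi_mono (LD j)); [apply leR|exact Hx|]. rewrite <- (hom_sup _ Hvh).
      apply (hom_mono _ Hvh). rewrite <- (RD i a). apply leR. }
    destruct (wi_key (LD j) (KD j) (RD j) _ _ Hx') as [l [H1 H2]].
    pose proof (proj2_sig (ph i a)) as HI. pose proof HI as [_ [HI1 _]].
    apply (HI1 _ (lsup (map (c j) l))).
    + eapply leT. exact Hy. rewrite <- (hom_lsup _ (ch j)). apply (hom_mono _ (ch j)). exact H2.
    + apply ideal_lsup; auto. intros z' Hz'. apply in_map_iff in Hz' as [z [<- Hz]].
      destruct (H1 z Hz) as [t [[a' [Ha' ->]] Hzt]]. simpl. unfold phi_set. exists a'. split; auto.
      rewrite <- (ccompat i j v a'). apply (hom_mono _ (ch j)). apply (wi_le (LD j)); auto.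
  - intros [x [Hx Hy]]. exists (D_map d v x). split.
    + apply (hom_wi (LD i) (LD j)); auto.
    + rewrite ccompat. exact Hy.
Qed.

Lemma C_compact : compact C.
Proof.
  destruct Hcol as [Hcoc Huniv].
  assert (Hc' : is_cocone d (Kq C_locale) ph).
  { split; [apply K_obj|split]. apply ph_cat. apply ph_compat. }
  destruct (Huniv _ ph Hc') as [[h [Hh1 Hh2]] _].
  assert (Hh : inv_qhom _ _ h) by apply Hh1.
  assert (HM : forall m, M m -> forall y, proj1_sig (h m) y -> le y m).
  { induction 1 as [i a|z Hz|x y Hx IHx Hy IHy].
    - intros y. rewrite Hh2. simpl. intros [x [Hx Hyx]]. eapply leT. exact Hyx.
      apply (hom_mono _ (ch i)). apply (wi_le (LD i)); auto.
    - intros; rewrite (G2 _ _ _ _ Hz Hu), u_top. apply le_top.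
    - intros w. rewrite (hom_mul _ Hh). simpl. intros [H1 H2]. apply (mul_glb C_locale); auto. }
  assert (Hb : forall x y, proj1_sig (h x) y -> le y x).
  { intros x y Hy. assert (Hle := hom_mono _ Hh _ _ (gen x)). apply Hle in Hy.
    rewrite (hom_sup _ Hh) in Hy. destruct Hy as [l [H1 H2]]. eapply leT. exact H2.
    apply lsup_least. intros z Hz. destruct (H1 z Hz) as [J [[m [[Hm Hmx] ->]] HJ]].
    eapply leT; [|exact Hmx]. apply HM; auto. }
  intros S Htop.
  assert (HT : h (top C) = Kfull C_locale).
  { eapply G5. exact Hh1. rewrite <- u_top. exact Hu. apply K_isU. }
  assert (H1 : proj1_sig (h (sup S)) (top C)) by (rewrite <- Htop, HT; exact I).
  rewrite (hom_sup _ Hh) in H1. destruct H1 as [l [Hl1 Hl2]].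
  assert (G : forall l, (forall z, In z l -> exists J, img h S J /\ proj1_sig J z) ->
    exists F, (forall s, In s F -> S s) /\ le (lsup l) (lsup F)).
  { clear l Hl1 Hl2. intro l. induction l as [|z l IH]; intro H.
    - exists nil. split. simpl; tauto. rewrite lsup_nil. apply bot_le.
    - destruct IH as [F [HF1 HF2]]. intros; apply H; simpl; auto.
      destruct (H z (or_introl eq_refl)) as [J [[s [Hs ->]] Hz]].
      exists (s :: F). split. intros w [<-|Hw]; auto.
      rewrite !lsup_cons. apply join_least. eapply leT; [apply (Hb s z Hz)|apply join_l].
      eapply leT; [exact HF2|apply join_r]. }
  destruct (G l Hl1) as [F [HF1 HF2]]. exists F. split; auto.
  apply leA. eapply leT. exact Hl2. exact HF2. apply le_top.
Qed.
End Main.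

Theorem corollary4p4 :
  forall (k : qcat) (d : diagram k),
    (forall i : J_obj d, compact_regular_locale (D_obj d i)) ->
    forall (C : quantale) (c : forall i, D_obj d i -> C),
      is_colimit d C c ->
      compact_regular_locale C.
Proof.
  intros k d hD C c Hcol.
  destruct (G1 k C (proj1 (proj1 Hcol))) as [u Hu].
  split; [|split].
  - exact (C_locale k d hD C c Hcol u Hu).
  - exact (C_compact k d hD C c Hcol u Hu).
  - exact (C_regular k d hD C c Hcol u Hu).
Qed.
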